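(* Let $\Omega=\{1,\dots,n\}$ be a finite ground set, let $\hat f:2^\Omega\to\mathbb{R}$ be any set function, let $b>0$ be a budget and let $c_i$, $i\in\Omega$, be costs with $0<c_i\le b$ for all $i$. Run the following procedure: set $X_1\leftarrow\emptyset$ and $k\leftarrow\arg\min_{i\in\Omega}\hat f(\{i\})/c_i$; while $c_k\le b-\sum_{i\in X_1}c_i$, set $X_1\leftarrow X_1\cup\{k\}$ and $k\leftarrow\arg\min_{i\in\Omega\setminus X_1}\hat f(X_1\cup\{i\})/c_i$ (ties broken arbitrarily); when the loop stops, set $a\leftarrow k$. Let $X_{\mathrm{greedy1}}=X_1$ and $X_{\mathrm{greedy1a}}=X_1\cup\{a\}$, and define $$\beta=1-\prod_{i\in X_{\mathrm{greedy1}}}\Big(1-\frac{c_i}{b}\Big),\qquad \beta_a=1-\prod_{i\in X_{\mathrm{greedy1a}}}\Big(1-\frac{c_i}{b}\Big).$$ Let $\gamma\in(0,1]$ be such that $\sum_{i\in X_{\mathrm{greedy1}}}c_i=\gamma b$. Then $\beta\in(1-e^{-\gamma},1]$ and $\beta_a\in(1-\gamma e^{-\gamma},1]$.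
   Context: This is the first phase of a cost-effective forward greedy selection for budget-constrained minimization of $\hat f$ over sets $X$ with $\sum_{i\in X}c_i\le b$; $\gamma$ is the fraction of the budget used by the set $X_1$ produced by that phase, and $a$ is the element that the greedy rule would add next but which no longer fits the remaining budget. *)

(* Defs.v *)
From HB Require Import structures.
From mathcomp Require Import all_boot all_order all_algebra.
From mathcomp Require Import all_classical all_reals all_analysis.
Set Implicit Arguments. Unset Strict Implicit. Unset Printing Implicit Defensive.
Import Order.TTheory GRing.Theory Num.Theory.
Local Open Scope ring_scope.

Definition prefix_set (n : nat) (s : seq 'I_n) (j : nat) : {set 'I_n} :=
  [set x in take j s].

Definition cost_sum (R : realType) (n : nat) (c : 'I_n -> R) (X : {set 'I_n}) : R :=
  \sum_(i in X) c i.

(* [greedy_phase1 f c b X1 a]: (X1, a) is a possible outcome (ties broken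
   arbitrarily) of the first phase of the cost-effective forward greedy:
   s is the sequence of elements added in order; the j-th added element
   minimizes f(X_j ∪ {i}) / c_i over i ∉ X_j and fits the remaining budget;
   at the end a minimizes f(X1 ∪ {i}) / c_i over i ∉ X1 and does not fit. *)
Definition greedy_phase1 (R : realType) (n : nat) (f : {set 'I_n} -> R)
    (c : 'I_n -> R) (b : R) (X1 : {set 'I_n}) (a : 'I_n) : Prop :=
  exists s : seq 'I_n,
    X1 = [set x in s] /\
    (forall j : nat, (j < size s)%N ->
       let Xj := prefix_set s j in
       let k := nth a s j in
       [/\ k \notin Xj,
           (forall i, i \notin Xj ->
              f (Xj :|: [set k]) / c k <= f (Xj :|: [set i]) / c i)
         & c k <= b - cost_sum c Xj]) /\
    [/\ a \notin X1,
        (forall i, i \notin X1 ->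
           f (X1 :|: [set a]) / c a <= f (X1 :|: [set i]) / c i)
      & b - cost_sum c X1 < c a].

Definition beta (R : realType) (n : nat) (c : 'I_n -> R) (b : R) (X : {set 'I_n}) : R :=
  1 - \prod_(i in X) (1 - c i / b).

(* Main.v *)
Require Import Defs.
From HB Require Import structures.
From mathcomp Require Import all_boot all_order all_algebra.
From mathcomp Require Import all_classical all_reals all_analysis.
From mathcomp Require Import lra.
Import Order.TTheory GRing.Theory Num.Theory.
Local Open Scope ring_scope.

Lemma key (R : realType) (n : nat) (x : 'I_n -> R) (S : {set 'I_n}) :
  (forall i, 0 < x i <= 1) -> S != finset.set0 ->
  \prod_(i in S) (1 - x i) < expR (- \sum_(i in S) x i).
Proof.
move=> hx /set0Pn [j jS].
rewrite (bigD1 j) //= (bigD1 j jS) /= opprD expRD.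
set P := \prod_(i in S | i != j) _.
set E := expR (- \sum_(i in S | i != j) x i).
have hE : 0 < E by rewrite expR_gt0.
have hPE : P <= E.
  rewrite /E -sumrN expR_sum; apply: ler_prod => i _.
  have := hx i; have := expR_ge1Dx (- x i); move=> h1 /andP[h2 h3].
  apply/andP; split; lra.
have hP : 0 <= P by apply: prodr_ge0 => i _; have := hx i; move/andP=> [? ?]; lra.
have hj := hx j; move/andP: hj => [hj1 hj2].
have hlt : 1 - x j < expR (- x j).
  have := @expR_gt1Dx R (- x j); rewrite oppr_eq0 gt_eqF //; move=> /(_ isT); lra.
nra.
Qed.

Lemma fin (R : realType) (P E g y : R) :
  P < E -> 0 <= P -> 0 <= y -> y <= g -> 0 < g ->
  (1 - E < 1 - P <= 1) /\ (1 - g * E < 1 - y * P <= 1).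
Proof.
move=> h1 h2 h3 h4 h5.
have hm1 : 0 <= y * P by rewrite mulr_ge0.
have hm2 : y * P <= g * P by rewrite ler_wpM2r.
have hm3 : g * P < g * E by rewrite ltr_pM2l.
split; apply/andP; split; lra.
Qed.

Theorem proposition3 (R : realType) (n : nat) (f : {set 'I_n} -> R)
    (c : 'I_n -> R) (b : R) :
  0 < b -> (forall i, 0 < c i <= b) ->
  forall (X1 : {set 'I_n}) (a : 'I_n), greedy_phase1 f c b X1 a ->
  forall gamma : R, 0 < gamma <= 1 -> cost_sum c X1 = gamma * b ->
  (1 - expR (- gamma) < beta c b X1 <= 1) /\
  (1 - gamma * expR (- gamma) < beta c b (X1 :|: [set a]) <= 1).
Proof.
move=> hb hc X1 a [s [_ [_ [haX1 _ hfit]]]] gamma /andP[hg0 hg1] hsum.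
set x := fun i => c i / b.
have hx : forall i, 0 < x i <= 1.
  move=> i; have /andP[h1 h2] := hc i; rewrite /x; apply/andP; split.
    by rewrite divr_gt0.
  by rewrite ler_pdivrMr // mul1r.
have hsx : \sum_(i in X1) x i = gamma.
  by rewrite /x -mulr_suml -/(cost_sum c X1) hsum mulfK // gt_eqF.
have hne : X1 != finset.set0.
  apply/negP => /eqP h; move: hsum; rewrite /cost_sum h big_set0 => h0.
  have : 0 < gamma * b by rewrite mulr_gt0.
  by rewrite -h0 ltxx.
have hk := @key R n x X1 hx hne; rewrite hsx in hk.
have hP : 0 <= \prod_(i in X1) (1 - x i).
  by apply: prodr_ge0 => i _; have /andP[? ?] := hx i; lra.
have hxa : 1 - gamma < x a.
  have ca : c a = x a * b by rewrite /x divfK // gt_eqF.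
  move: hfit; rewrite hsum ca => h; nra.
have /andP[hxa1 hxa2] := hx a.
have e : \prod_(i in X1 :|: [set a]) (1 - c i / b) = (1 - x a) * \prod_(i in X1) (1 - x i).
  by rewrite finset.setUC big_setU1.
rewrite /beta e.
have hE : 0 < expR (- gamma) by rewrite expR_gt0.
have hy1 : 0 <= 1 - x a by rewrite subr_ge0.
have hy2 : 1 - x a <= gamma by rewrite lerBlDr -lerBlDl ltW.
case: (@fin _ _ _ _ _ hk hP hy1 hy2 hg0) => A B; split; [exact A | exact B].
Qed.
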